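(* Let $S$ be a finite set, $\mathcal X=S^N$, $\mu$ uniform on $\mathcal X$, $P$ a Markov kernel on $\mathcal X$ reversible with respect to $\mu$ (of coordinate-replacement form), $\Omega\subseteq\mathcal X$ a $P$-invariant set with $\mu(\Omega)>0$, $\pi=\mu(\cdot\mid\Omega)$, and $G\subseteq\Omega$ with $\pi(G)>0$. Let $K_G(x,y)=P(x,y)$ for $x,y\in G$ (the kernel $P$ killed on exiting $G$) and $\pi_G=\pi(\cdot\mid G)$. Assume that every nonnegative $F:\mathcal X\to\mathbb R$ with $\operatorname{supp}(F)\subseteq G$ satisfies $\operatorname{Ent}_\mu(F^2)\le A\,\mathcal E_P^\mu(F,F)$. Then every nonnegative $f:G\to\mathbb R$ satisfies \[ \operatorname{Ent}_{\pi_G}(f^2)\le A\,\mathcal E^{\pi_G}_{K_G}(f,f). \]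
   Context: A coordinate-replacement kernel has the form $Pf(x)=\frac1N\sum_{i}\sum_{u\in S}K_i(x_{-i};x_i,u)f(x^{i,u})$ with each $K_i(x_{-i})$ a Markov kernel on $S$ reversible w.r.t. uniform measure ($x^{i,u}$: replace coordinate $i$ by $u$). $\operatorname{Ent}_\rho(f^2)=\rho(f^2\log f^2)-\rho(f^2)\log\rho(f^2)$. For a Markov kernel, $\mathcal E^\rho_K(f,f)=\frac12\sum_{x,y}\rho(x)K(x,y)(f(x)-f(y))^2$; for the substochastic kernel $K_G$ (nonnegative, row sums at most one), $\mathcal E^{\pi_G}_{K_G}(f,f)=\langle f,(I-K_G)f\rangle_{\pi_G}$. *)

(* Defs.v *)
From HB Require Import structures.
From mathcomp Require Import all_boot all_order all_algebra.
From mathcomp Require Import reals exp.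
Set Implicit Arguments. Unset Strict Implicit. Unset Printing Implicit Defensive.
Import Order.TTheory GRing.Theory Num.Theory.
Local Open Scope ring_scope.

Section Defs.
Variables (R : realType) (S : finType) (N : nat).

Definition config := {ffun 'I_N -> S}.

Definition repl (x : config) (i : 'I_N) (u : S) : config :=
  [ffun j => if j == i then u else x j].

Definition unif (x : config) : R := (#|{: config}|%:R)^-1.

Definition cond (rho : config -> R) (B : {set config}) (x : config) : R :=
  if x \in B then rho x / (\sum_(y in B) rho y) else 0.

Definition Ent (rho : config -> R) (g : config -> R) : R :=
  \sum_x rho x * (g x * ln (g x))
  - (\sum_x rho x * g x) * ln (\sum_x rho x * g x).

Definition dirichlet (rho : config -> R) (K : config -> config -> R)
  (f : config -> R) : R :=
  2^-1 * \sum_x \sum_y rho x * K x y * (f x - f y) ^+ 2.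

(* Dirichlet form of a substochastic kernel: <f, (I - K) f>_rho *)
Definition dirichlet_sub (rho : config -> R) (K : config -> config -> R)
  (f : config -> R) : R :=
  \sum_x rho x * (f x * (f x - \sum_y K x y * f y)).

(* coordinate kernels K i x a b = K_i(x_{-i}; a, b): depend only on x_{-i},
   Markov kernels on S, reversible w.r.t. the uniform measure (symmetric) *)
Definition coord_kernels (K : 'I_N -> config -> S -> S -> R) : Prop :=
  [/\ (forall i (x y : config), (forall j, j != i -> x j = y j) -> K i x = K i y),
      (forall i x a b, 0 <= K i x a b),
      (forall i x a, \sum_b K i x a b = 1) &
      (forall i x a b, K i x a b = K i x b a)].

Definition coord_P (K : 'I_N -> config -> S -> S -> R) (x y : config) : R :=
  (N%:R)^-1 * \sum_i \sum_u K i x (x i) u * (y == repl x i u)%:R.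

Definition P_invariant (P : config -> config -> R) (Om : {set config}) : Prop :=
  forall x y, x \in Om -> y \notin Om -> P x y = 0.

Definition killed (P : config -> config -> R) (G : {set config})
  (x y : config) : R :=
  if (x \in G) && (y \in G) then P x y else 0.

End Defs.

(* Main.v *)
Require Import Defs.
From HB Require Import structures.
From mathcomp Require Import all_boot all_order all_algebra.
From mathcomp Require Import reals exp.
From mathcomp Require Import ring lra.
Import Order.TTheory GRing.Theory Num.Theory.
Local Open Scope ring_scope.
Set Implicit Arguments. Unset Strict Implicit.

Section K.
Variables (R : realType) (S : finType) (N : nat).
Variable K : 'I_N -> config S N -> S -> S -> R.
Hypothesis HK : coord_kernels K.

Lemma inner_eq i (x y : config S N) :
  \sum_u K i x (x i) u * (y == repl x i u)%:R =
  if [forall j, (j != i) ==> (y j == x j)] then K i x (x i) (y i) else 0.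
Proof.
case: ifP => [/forallP Ha|Hn].
  rewrite (bigD1 (y i)) //= big1 => [|u Hu].
    suff -> : y == repl x i (y i) by rewrite mulr1 addr0.
    apply/eqP/ffunP => j; rewrite ffunE; case: eqP => [->//|/eqP Hj].
    by apply/eqP; have := Ha j; rewrite Hj.
  case: eqP => [Ey|]; last by rewrite mulr0.
  by move: Hu; rewrite Ey ffunE eqxx eqxx.
rewrite big1 // => u _; case: eqP => [Ey|]; last by rewrite mulr0.
move/negbT: Hn => /forallPn [j]; rewrite Ey ffunE negb_imply.
by case: eqP => [|_]; rewrite ?eqxx.
Qed.

Lemma P_sym x y : coord_P K x y = coord_P K y x.
Proof.
rewrite /coord_P; congr (_ * _); apply: eq_bigr => i _.
rewrite !inner_eq.
have Hs : [forall j, (j != i) ==> (y j == x j)] = [forall j, (j != i) ==> (x j == y j)].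
  by apply: eq_forallb => j; rewrite (eq_sym (y j)).
rewrite Hs; case: ifP => // /forallP Ha.
have [H1 _ _ H4] := HK.
rewrite (H1 i x y); first exact: H4.
move=> j Hj; apply/eqP; have := Ha j; by rewrite Hj.
Qed.

Lemma P_row x : (0 < N)%N -> \sum_y coord_P K x y = 1.
Proof.
move=> HN; rewrite /coord_P -mulr_sumr.
have E i u : \sum_y K i x (x i) u * (y == repl x i u)%:R = K i x (x i) u.
  rewrite (bigD1 (repl x i u)) //= eqxx big1 => [|y /negbTE ->]; by rewrite ?mulr0 ?addr0 ?mulr1.
rewrite exchange_big /=.
under eq_bigr => i _ do rewrite exchange_big /=.
under eq_bigr => i _ do under eq_bigr => u _ do rewrite E.
have [_ _ H3 _] := HK.
under eq_bigr => i _ do rewrite H3.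
by rewrite sumr_const card_ord mulVf // pnatr_eq0 -lt0n.
Qed.
End K.

Theorem proposition2p3 (R : realType) (S : finType) (N : nat)
  (K : 'I_N -> config S N -> S -> S -> R)
  (Om G : {set config S N}) (A : R) :
  (0 < N)%N ->
  coord_kernels K ->
  P_invariant (coord_P K) Om ->
  0 < \sum_(x in Om) @unif R S N x ->
  G \subset Om ->
  0 < \sum_(x in G) cond (@unif R S N) Om x ->
  (forall F : config S N -> R,
     (forall x, 0 <= F x) -> (forall x, x \notin G -> F x = 0) ->
     Ent (@unif R S N) (fun x => F x ^+ 2) <= A * dirichlet (@unif R S N) (coord_P K) F) ->
  forall f : config S N -> R,
    (forall x, x \in G -> 0 <= f x) ->
    Ent (cond (cond (@unif R S N) Om) G) (fun x => f x ^+ 2)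
      <= A * dirichlet_sub (cond (cond (@unif R S N) Om) G) (killed (coord_P K) G) f.
Proof.
move=> HN HK _ HOm HGOm HGpos HF f Hf.
set c : R := (#|{: config S N}|%:R)^-1.
have unifE x : @unif R S N x = c by [].
set mOm := \sum_(x in Om) c.
set mG := \sum_(x in G) c.
have mOm_gt0 : 0 < mOm by exact: HOm.
have condOm x : cond (@unif R S N) Om x = if x \in Om then c / mOm else 0 by rewrite /cond.
have sG : \sum_(x in G) cond (@unif R S N) Om x = mG / mOm.
  rewrite /mG mulr_suml; apply: eq_bigr => x xG.
  by rewrite condOm (subsetP HGOm x xG).
have mG_gt0 : 0 < mG.
  have := HGpos; rewrite sG => H.
  have -> : mG = mG / mOm * mOm by rewrite divfK // gt_eqF.
  exact: mulr_gt0.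
have mG_le1 : mG <= 1.
  have Hc : 0 <= c by rewrite invr_ge0 ler0n.
  rewrite /mG sumr_const -mulr_natl.
  apply: (@le_trans _ _ (#|{: config S N}|%:R * c)).
    by rewrite ler_wpM2r // ler_nat max_card.
  rewrite /c mulfV // pnatr_eq0 -lt0n.
  apply/card_gt0P.
  move: mG_gt0; rewrite /mG; case: (set_0Vmem G) => [->|[x _]]; last by exists x.
  by rewrite big_set0 ltxx.
have wE x : cond (cond (@unif R S N) Om) G x = if x \in G then c / mG else 0.
  rewrite {1}/cond sG condOm; case: ifP => // xG.
  rewrite (subsetP HGOm x xG); field.
  by rewrite !gt_eqF.
set F := fun x => if x \in G then f x else 0.
have HF0 x : 0 <= F x by rewrite /F; case: ifP => // /Hf.
have HFs x : x \notin G -> F x = 0 by rewrite /F => /negbTE ->.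
have := HF F HF0 HFs.
set a := \sum_x c * (F x ^+ 2 * ln (F x ^+ 2)).
set m := \sum_x c * F x ^+ 2.
have EntU : Ent (@unif R S N) (fun x => F x ^+ 2) = a - m * ln m by rewrite /Ent.
rewrite EntU => Hmain.
have Hm : 0 <= m by apply: sumr_ge0 => x _; rewrite mulr_ge0 ?invr_ge0 ?ler0n ?sqr_ge0.
have EntE : Ent (cond (cond (@unif R S N) Om) G) (fun x => f x ^+ 2)
    = a / mG - m / mG * ln (m / mG).
  have e1 : \sum_x cond (cond (@unif R S N) Om) G x * (f x ^+ 2 * ln (f x ^+ 2)) = a / mG.
    rewrite /a mulr_suml; apply: eq_bigr => x _; rewrite wE /F.
    case: ifP => _; first by rewrite mulrAC.
    by rewrite expr0n /= !mul0r mulr0 mul0r.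
  have e2 : \sum_x cond (cond (@unif R S N) Om) G x * f x ^+ 2 = m / mG.
    rewrite /m mulr_suml; apply: eq_bigr => x _; rewrite wE /F.
    case: ifP => _; first by rewrite mulrAC.
    by rewrite expr0n /= !mul0r mulr0 mul0r.
  by rewrite /Ent e1 e2.
have dirE : dirichlet (@unif R S N) (coord_P K) F
    = mG * dirichlet_sub (cond (cond (@unif R S N) Om) G) (killed (coord_P K) G) f.
  have RHS : mG * dirichlet_sub (cond (cond (@unif R S N) Om) G) (killed (coord_P K) G) f
      = \sum_x c * (F x * (F x - \sum_y coord_P K x y * F y)).
    rewrite /dirichlet_sub mulr_sumr; apply: eq_bigr => x _.
    rewrite wE /F; case: ifP => xG; last by rewrite !mul0r !mulr0.
    have -> : \sum_y killed (coord_P K) G x y * f y = \sum_y coord_P K x y * (if y \in G then f y else 0).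
      apply: eq_bigr => y _; rewrite /killed xG /=.
      by case: ifP; rewrite ?mulr0 ?mul0r.
    set t := _ * _; rewrite /t; field.
    by rewrite gt_eqF.
  rewrite RHS /dirichlet /unif -/c.
  set T1 := \sum_x \sum_y c * coord_P K x y * F x ^+ 2.
  set T2 := \sum_x \sum_y c * coord_P K x y * F y ^+ 2.
  set T3 := \sum_x \sum_y c * coord_P K x y * (F x * F y).
  have E1 : \sum_x \sum_y c * coord_P K x y * (F x - F y) ^+ 2 = T1 + T2 - 2 * T3.
    rewrite /T1 /T2 /T3 !mulr_sumr -big_split -sumrB /=; apply: eq_bigr => x _.
    rewrite !mulr_sumr -big_split -sumrB /=; apply: eq_bigr => y _.
    ring.
  have E2 : T2 = T1.
    rewrite /T2 exchange_big /=; apply: eq_bigr => x _; apply: eq_bigr => y _.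
    by rewrite P_sym.
  have E3 : T1 = \sum_x c * F x ^+ 2.
    apply: eq_bigr => x _.
    by rewrite -mulr_suml -mulr_sumr P_row // mulr1.
  have E4 : T3 = \sum_x c * F x * \sum_y coord_P K x y * F y.
    apply: eq_bigr => x _; rewrite mulr_sumr; apply: eq_bigr => y _; ring.
  have E5 : \sum_x c * (F x * (F x - \sum_y coord_P K x y * F y))
      = \sum_x c * F x ^+ 2 - \sum_x c * F x * \sum_y coord_P K x y * F y.
    rewrite -sumrB; apply: eq_bigr => x _; ring.
  rewrite E1 E2 E5 -E3 -E4; field.
  by [].
have key : a / mG - m / mG * ln (m / mG) <= (a - m * ln m) / mG.
  have [m0|mpos] := eqVneq m 0.
    by rewrite m0 !mul0r !subr0.
  have mgt0 : 0 < m by rewrite lt_def mpos Hm.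
  rewrite ln_div ?posrE //.
  have -> : a / mG - m / mG * (ln m - ln mG) = (a - m * ln m) / mG + m / mG * ln mG.
    by rewrite mulrBr mulrBl opprB; ring.
  rewrite gerDl; apply: mulr_ge0_le0; last exact: ln_le0.
  by rewrite divr_ge0 // ltW.
rewrite EntE; apply: (le_trans key).
rewrite dirE in Hmain.
rewrite ler_pdivrMr // -mulrA (mulrC _ mG).
exact: Hmain.
Qed.
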